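(* Let $M:[0,1]\to\mathbb{R}^d$ be a continuous martingale with $M_0=0$, let $D$ be a partition of $[0,1]$ and $M^D$ the Hoff process of $M$. If $\delta\ge|D|$ then \[ \sup_{|t-s|\le\delta}|M^D_{s,t}|\le 3\sup_{|t-s|\le2\delta}|M_{s,t}|. \]
   Context: A partition $D=(t_i)_{i=0}^n$ of $[0,1]$ satisfies $0=t_0<\dots<t_n=1$, mesh $|D|=\max_i|t_{i+1}-t_i|$, $t_i^*=\tfrac12(t_i+t_{i+1})$. The Hoff process of a continuous path $x:[0,1]\to\mathbb{R}^d$ with $x_0=0$ is the piecewise-linear path $x^D=(x^{D,b},x^{D,f}):[0,1]\to\mathbb{R}^{2d}$ given by: $x^D_u=(x_{t_{i-1}}+\frac{u-t_i}{t_i^*-t_i}(x_{t_i}-x_{t_{i-1}});\,x_{t_{i+1}})$ for $u\in[t_i,t_i^* )$, $i=1,\dots,n-1$; $x^D_u=(x_{t_i};\,x_{t_{i+1}}+\frac{u-t_i^*}{t_{i+1}-t_i^*}(x_{t_{i+2}}-x_{t_{i+1}}))$ for $u\in[t_i^*,t_{i+1})$, $i=0,\dots,n-2$; $x^D_u=(0;\,\frac{u}{t_0^*}x_{t_1})$ for $u\in[0,t_0^* )$; $x^D_u=(x_{t_{n-1}}+\frac{u-t_{n-1}^*}{t_n-t_{n-1}^*}(x_{t_n}-x_{t_{n-1}});\,x_{t_n})$ for $u\in[t_{n-1}^*,1]$. Increments $x_{s,t}=x_t-x_s$; suprema are over $s,t\in[0,1]$. *)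

(* Defs.v *)
From HB Require Import structures.
From mathcomp Require Import all_boot all_order all_algebra.
From mathcomp Require Import all_classical all_reals all_analysis.
Set Implicit Arguments. Unset Strict Implicit. Unset Printing Implicit Defensive.
Import Order.TTheory GRing.Theory Num.Theory.
Import numFieldNormedType.Exports.
Local Open Scope classical_set_scope.
Local Open Scope ring_scope.

Section Hoff.
Variables (R : realType) (d : nat).

Definition enorm (v : 'rV[R]_d) : R := Num.sqrt (\sum_(i < d) v ord0 i ^+ 2).

Definition enorm2 (p : 'rV[R]_d * 'rV[R]_d) : R :=
  Num.sqrt (\sum_(i < d) p.1 ord0 i ^+ 2 + \sum_(i < d) p.2 ord0 i ^+ 2).

Definition is_partition (n : nat) (t : nat -> R) : Prop :=
  t 0%N = 0 /\ t n = 1 /\ (forall i, (i < n)%N -> t i < t i.+1).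

Definition mesh (n : nat) (t : nat -> R) : R :=
  \big[Num.max/0]_(i < n) (t i.+1 - t i).

Definition midp (t : nat -> R) (i : nat) : R := (t i + t i.+1) / 2.

(* index i with t_i <= u < t_{i+1} (for u in [0,1)); equals n-1 for u = 1. *)
Definition pidx (n : nat) (t : nat -> R) (u : R) : nat :=
  \max_(i < n | t i <= u) (i : nat).

(* Hoff process x^D : [0,1] -> R^{2d}, as a pair (backward ; forward). *)
Definition hoff (n : nat) (t : nat -> R) (x : R -> 'rV[R]_d) (u : R)
  : 'rV[R]_d * 'rV[R]_d :=
  let i := pidx n t u in
  if u < midp t i then
    if i == 0%N then (0, (u / midp t 0%N) *: x (t 1%N))
    else (x (t i.-1) + ((u - t i) / (midp t i - t i)) *: (x (t i) - x (t i.-1)),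
          x (t i.+1))
  else
    if i == n.-1 then
      (x (t n.-1) + ((u - midp t n.-1) / (t n - midp t n.-1)) *: (x (t n) - x (t n.-1)),
       x (t n))
    else
      (x (t i),
       x (t i.+1) + ((u - midp t i) / (t i.+1 - midp t i)) *: (x (t i.+2) - x (t i.+1))).

End Hoff.

(* Main.v *)
Require Import Defs.
From HB Require Import structures.
From mathcomp Require Import all_boot all_order all_algebra.
From mathcomp Require Import all_classical all_reals all_analysis.
From mathcomp Require Import ring lra.
Import Order.TTheory GRing.Theory Num.Theory.
Import numFieldNormedType.Exports.
Local Open Scope classical_set_scope.
Local Open Scope ring_scope.

Section Euc.
Variables (R : realType) (d : nat).
Implicit Types v w : 'rV[R]_d.

Definition sqs v : R := \sum_(i < d) v ord0 i ^+ 2.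

Lemma sqs_ge0 v : 0 <= sqs v.
Proof. by apply: sumr_ge0 => i _; rewrite sqr_ge0. Qed.

Lemma enorm_ge0 v : 0 <= enorm v.
Proof. exact: sqrtr_ge0. Qed.

Lemma enorm_sqr v : enorm v ^+ 2 = sqs v.
Proof. by rewrite /enorm sqr_sqrtr // sqs_ge0. Qed.

Lemma sqrt_le (X Y : R) : 0 <= Y -> X <= Y ^+ 2 -> Num.sqrt X <= Y.
Proof.
move=> Y0 XY; rewrite -(ger0_norm Y0) -sqrtr_sqr ler_sqrt //.
exact: sqr_ge0.
Qed.

Lemma CS v w : (\sum_(i < d) v ord0 i * w ord0 i) ^+ 2 <= sqs v * sqs w.
Proof.
set A := sqs v; set B := sqs w; set C := \sum_(i < d) v ord0 i * w ord0 i.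
have B0 : 0 <= B by apply: sqs_ge0.
have [Bz|Bp] := eqVneq B 0.
  have wz : forall i, w ord0 i = 0.
    move=> i; apply/eqP; rewrite -sqrf_eq0; apply/eqP.
    move: Bz; rewrite /B /sqs => /eqP; rewrite psumr_eq0 => [/allP H|j _]; last exact: sqr_ge0.
    by apply/eqP/H; rewrite mem_index_enum.
  rewrite /C big1 ?Bz ?mulr0 ?expr0n // => i _; by rewrite wz mulr0.
have Bpos : 0 < B by rewrite lt_def Bp B0.
have H : 0 <= \sum_(i < d) (B * v ord0 i - C * w ord0 i) ^+ 2.
  by apply: sumr_ge0 => i _; exact: sqr_ge0.
have E : \sum_(i < d) (B * v ord0 i - C * w ord0 i) ^+ 2 = B * (A * B - C ^+ 2).
  have -> : \sum_(i < d) (B * v ord0 i - C * w ord0 i) ^+ 2 =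
     B ^+ 2 * A - 2 * B * C * C + C ^+ 2 * B.
    have e1 : B ^+ 2 * A = \sum_(i < d) B ^+ 2 * v ord0 i ^+ 2 by rewrite mulr_sumr.
    have e2 : 2 * B * C * C = \sum_(i < d) 2 * B * C * (v ord0 i * w ord0 i) by rewrite mulr_sumr.
    have e3 : C ^+ 2 * B = \sum_(i < d) C ^+ 2 * w ord0 i ^+ 2 by rewrite mulr_sumr.
    rewrite e1 e2 e3 -!sumrB -big_split /=.
    by apply: eq_bigr => i _; ring.
  ring.
rewrite E in H.
have : 0 <= A * B - C ^+ 2 by rewrite -(pmulr_rge0 _ Bpos).
lra.
Qed.

Lemma enormD v w : enorm (v + w) <= enorm v + enorm w.
Proof.
apply: sqrt_le; first by rewrite addr_ge0 // enorm_ge0.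
have -> : \sum_(i < d) (v + w) ord0 i ^+ 2 =
   sqs v + sqs w + 2 * \sum_(i < d) v ord0 i * w ord0 i.
  rewrite /sqs mulr_sumr -!big_split /=; apply: eq_bigr => i _; rewrite mxE; ring.
have C1 : \sum_(i < d) v ord0 i * w ord0 i <= enorm v * enorm w.
  set C := \sum_(i < d) _.
  apply: (le_trans (ler_norm C)).
  rewrite -sqrtr_sqr /enorm -sqrtrM ?sqs_ge0 // ler_sqrt; last first.
    by rewrite mulr_ge0 // sqs_ge0.
  exact: CS.
have := enorm_sqr v; have := enorm_sqr w.
nra.
Qed.

Lemma enormZ (a : R) v : enorm (a *: v) = `|a| * enorm v.
Proof.
rewrite /enorm.
have -> : \sum_(i < d) (a *: v) ord0 i ^+ 2 = a ^+ 2 * sqs v.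
  by rewrite /sqs mulr_sumr; apply: eq_bigr => i _; rewrite mxE exprMn.
by rewrite sqrtrM ?sqr_ge0 // sqrtr_sqr.
Qed.

Lemma enormN v : enorm (- v) = enorm v.
Proof. by rewrite -scaleN1r enormZ normrN normr1 mul1r. Qed.

Lemma enormB v w : enorm (v - w) <= enorm v + enorm w.
Proof. by rewrite -(enormN w) enormD. Qed.

Lemma enorm_conv (p q c : 'rV[R]_d) (lam S : R) :
  0 <= lam <= 1 -> enorm (p - c) <= S -> enorm (q - c) <= S ->
  enorm (p + lam *: (q - p) - c) <= S.
Proof.
move=> /andP[l0 l1] hp hq.
have -> : p + lam *: (q - p) - c = (1 - lam) *: (p - c) + lam *: (q - c).
  by apply/rowP => j; rewrite !mxE; ring.
apply: (le_trans (enormD _ _)); rewrite !enormZ.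
rewrite (ger0_norm l0) ger0_norm; last lra.
have := enorm_ge0 (p - c); have := enorm_ge0 (q - c).
nra.
Qed.

End Euc.
Arguments enormB {R d}.
Arguments enorm_sqr {R d}.
Arguments enorm_ge0 {R d}.
Section Grid.
Variables (R : realType) (d : nat) (n : nat) (t : nat -> R) (delta : R).
Hypothesis hP : is_partition n t.
Hypothesis hM : mesh n t <= delta.

Lemma n_gt0 : (0 < n)%N.
Proof.
case: hP => t0 [tn _]; case: n tn => [|m] // tn.
by move: t0; rewrite tn => /eqP; rewrite oner_eq0.
Qed.

Lemma t_mono i j : (i <= j <= n)%N -> t i <= t j.
Proof.
case: hP => _ [_ hlt].
elim: j => [|j IH] /andP[hij hjn].
  by rewrite leqn0 in hij; rewrite (eqP hij).
rewrite leq_eqVlt in hij; case/orP: hij => [/eqP -> //|hij].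
apply: (le_trans (IH _)); first by rewrite -ltnS hij /= ltnW.
by apply: ltW; apply: hlt.
Qed.

Lemma t_in {i : nat} : (i <= n)%N -> 0 <= t i <= 1.
Proof.
case: hP => t0 [tn _] hi; apply/andP; split.
  by rewrite -t0; apply: t_mono; rewrite leq0n.
by rewrite -tn; apply: t_mono; rewrite hi leqnn.
Qed.

Lemma gap {i : nat} : (i < n)%N -> t i.+1 - t i <= delta.
Proof.
move=> hi; apply: le_trans hM.
exact: (le_bigmax 0 (fun k : 'I_n => t k.+1 - t k) (Ordinal hi)).
Qed.

Lemma gap_pos {i : nat} : (i < n)%N -> 0 < t i.+1 - t i.
Proof. by case: hP => _ [_ h] hi; rewrite subr_gt0 h. Qed.

Lemma pidx_lt u : (pidx n t u < n)%N.
Proof.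
have n0 := n_gt0.
rewrite /pidx; apply: (@leq_ltn_trans n.-1); last by rewrite prednK.
by apply/bigmax_leqP => i _; rewrite -ltnS prednK.
Qed.

Lemma pidx_le u : 0 <= u -> t (pidx n t u) <= u.
Proof.
move=> u0; have n0 := n_gt0.
have c : (0 < #|[pred i : 'I_n | (t i <= u)%R]|)%N.
  apply/card_gt0P; exists (Ordinal n0); rewrite inE /=.
  by case: hP => -> _.
have [i0 hi0 e] := @eq_bigmax_cond _ [pred i : 'I_n | (t i <= u)%R] (fun i => nat_of_ord i) c.
rewrite /pidx e; by move: hi0; rewrite inE.
Qed.

Lemma pidx_next u : ((pidx n t u).+1 < n)%N -> u < t (pidx n t u).+1.
Proof.
move=> h; rewrite ltNge; apply/negP => hle.
have := @leq_bigmax_cond _ [pred i : 'I_n | (t i <= u)%R] (fun i => nat_of_ord i) (Ordinal h) hle.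
by rewrite /= -/(pidx n t u) ltnn.
Qed.


Definition isconv (x : R -> 'rV[R]_d) (v : 'rV[R]_d) (lo hi : R) :=
  exists a1 a2 lam, [/\ 0 <= lam <= 1, v = x a1 + lam *: (x a2 - x a1),
     0 <= a1 <= 1, 0 <= a2 <= 1 & (lo <= a1 <= hi) && (lo <= a2 <= hi)].

Lemma isconv_const x a lo hi : 0 <= a <= 1 -> lo <= a <= hi -> isconv x (x a) lo hi.
Proof.
move=> h1 h2; exists a, a, 0; split => //; first by rewrite lexx ler01.
  by rewrite scale0r addr0.
by rewrite h2.
Qed.

Lemma frac01 (p q : R) : 0 <= p -> p <= q -> 0 < q -> 0 <= p / q <= 1.
Proof.
move=> p0 pq q0; rewrite divr_ge0 ?(ltW q0) //= ler_pdivrMr // mul1r //.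
Qed.

Lemma hoff_decomp (x : R -> 'rV[R]_d) u : x 0 = 0 -> 0 <= u <= 1 ->
  isconv x (hoff n t x u).1 (u - 2 * delta) (u + delta) /\
  isconv x (hoff n t x u).2 (u - delta) (u + 2 * delta).
Proof.
move=> hx0 /andP[u0 u1].
have n0 := n_gt0.
have hlt := pidx_lt u; have hle := @pidx_le u u0; have hnx := @pidx_next u.
have tn : t n = 1 by case: hP => _ [].
have t0 : t 0%N = 0 by case: hP.
rewrite /hoff /=.
move: hlt hle hnx; move: (pidx n t u) => i hlt hle hnx.
have gi := gap hlt; have gpi := gap_pos hlt.
have ti := t_in (ltnW hlt); have ti1 := t_in hlt.
rewrite /midp in gi gpi *.
case: ifP => hm.
  case: eqP => hi0.
    subst i; split.
      exists 0, 0, 0; split => //; first by rewrite lexx ler01.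
        by rewrite hx0 scale0r addr0.
      by rewrite lexx ler01.
      by rewrite lexx ler01.
      rewrite t0 in hle gi gpi hm *; apply/andP; split; apply/andP; split; lra.
    exists 0, (t 1%N), (u / ((t 0%N + t 1%N) / 2)); split => //.
    - rewrite t0 in hm gpi *; apply: frac01; lra.
    - by rewrite hx0 subr0 add0r.
    - by rewrite lexx ler01.
    - rewrite t0 in hle gi gpi hm *; apply/andP; split; apply/andP; split; lra.
  case: i hi0 hlt hle hnx gi gpi ti ti1 hm => [//|j] _ hlt hle hnx gi gpi ti ti1 hm /=.
  have gj := gap (ltnW hlt); have tj := t_in (ltnW (ltnW hlt)). have gpj := gap_pos (ltnW hlt).
  split.
    exists (t j), (t j.+1), ((u - t j.+1) / ((t j.+1 + t j.+2) / 2 - t j.+1)); split => //.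
    - apply: frac01; lra.
    - apply/andP; split; apply/andP; split; lra.
  apply: isconv_const => //; apply/andP; split; lra.
case: eqP => hin.
  have hn : n = i.+1 by rewrite hin prednK.
  have etn : t n = t i.+1 by rewrite hn.
  rewrite -hin etn; split.
    exists (t i), (t i.+1), ((u - (t i + t i.+1) / 2) / (t i.+1 - (t i + t i.+1) / 2)); split => //.
    - apply: frac01; rewrite -?etn; lra.
    - apply/andP; split; apply/andP; split; rewrite -?etn; lra.
  apply: isconv_const => //; apply/andP; split; rewrite -?etn; lra.
have hi2 : (i.+2 <= n)%N.
  by move: hin hlt; case: n => // m; rewrite /= ltnS leq_eqVlt => /eqP; rewrite eq_sym => /negPf ->.
have hu := hnx hi2.
have g1 := gap hi2; have ti2 := t_in hi2; have gp2 := gap_pos hi2.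
split.
  apply: isconv_const => //; apply/andP; split; lra.
exists (t i.+1), (t i.+2), ((u - (t i + t i.+1) / 2) / (t i.+1 - (t i + t i.+1) / 2)); split => //.
- apply: frac01; lra.
- apply/andP; split; apply/andP; split; lra.
Qed.

End Grid.
Arguments isconv {R d}.

Lemma keyS (R : realType) (d : nat) (x : R -> 'rV[R]_d) v lo hi c (S : R) :
  isconv x v lo hi -> 
  (forall a, 0 <= a <= 1 -> lo <= a <= hi -> enorm (x a - x c) <= S) ->
  enorm (v - x c) <= S.
Proof.
move=> [a1 [a2 [lam [hl -> h1 h2 /andP[w1 w2]]]]] H.
by apply: enorm_conv => //; apply: H.
Qed.

Lemma coord_le (R : realType) (d : nat) (w : 'rV[R]_d) i : `|w ord0 i| <= `|w|.
Proof.
have -> : `|w| = mx_norm w by [].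
rewrite mx_normrE.
exact: (le_bigmax 0 (fun ij : 'I_1 * 'I_d => `|w ij.1 ij.2|) (ord0, i)).
Qed.

Arguments coord_le {R d}.
Arguments keyS {R d x v lo hi c S}.

Theorem mainTheorem13 (R : realType) (d : nat) (x : R -> 'rV[R]_d)
  (n : nat) (t : nat -> R) (delta : R) :
  {within `[0, 1], continuous x} ->
  x 0 = 0 ->
  is_partition n t ->
  mesh n t <= delta ->
  forall s u : R, 0 <= s <= 1 -> 0 <= u <= 1 -> `|u - s| <= delta ->
    enorm2 (hoff n t x u - hoff n t x s) <=
    3 * sup [set r : R | exists s' u' : R,
               [/\ 0 <= s' <= 1, 0 <= u' <= 1, `|u' - s'| <= 2 * delta
                 & r = enorm (x u' - x s')]].
Proof.
move=> hc hx0 hP hM s u hs hu hsu.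
set E := [set r : R | _].
have hb := compact_bounded (continuous_compact hc (@segment_compact R 0 1)).
have [B HB] : exists B : R, forall v, 0 <= v <= 1 -> `|x v| <= B.
  case: hb => M0 [_ HM]; exists (M0 + 1); move=> v hv.
  apply: (HM (M0 + 1)); first by rewrite ltrDl ltr01.
  by exists v => //; rewrite /= in_itv /=.
have hub : has_ubound E.
  exists (Num.sqrt ((2 * B) ^+ 2 *+ d)) => r [s' [u' [hs' hu' _ ->]]].
  rewrite /enorm ler_sqrt; last by rewrite mulrn_wge0 // sqr_ge0.
  apply: (@le_trans _ _ (\sum_(i < d) (2 * B) ^+ 2)); last first.
    by rewrite sumr_const card_ord.
  apply: ler_sum => i _.
  have h1 : `|(x u' - x s') ord0 i| <= 2 * B.
    have := coord_le (x u' - x s') i; have := ler_normB (x u') (x s').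
    have := HB _ hs'; have := HB _ hu'; lra.
  move: h1; rewrite ler_norml => /andP[h1 h2]; nra.
have hS : forall a c, 0 <= a <= 1 -> 0 <= c <= 1 -> `|a - c| <= 2 * delta ->
    enorm (x a - x c) <= sup E.
  move=> a c ha hc' hac; apply: ub_le_sup => //.
  by exists c, a; split.
move: hsu; rewrite ler_norml => /andP[hd1 hd2].
have [bu fu] := @hoff_decomp R d n t delta hP hM x u hx0 hu.
have [bs fs] := @hoff_decomp R d n t delta hP hM x s hx0 hs.
have split2 : forall (p q : 'rV[R]_d) c, enorm (p - x c) <= sup E ->
    enorm (q - x c) <= sup E -> enorm (p - q) <= 2 * sup E.
  move=> p q c h1 h2.
  have -> : p - q = (p - x c) - (q - x c) by apply/rowP => j; rewrite !mxE; ring.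
  apply: (le_trans (enormB _ _)); lra.
have HB1 : enorm ((hoff n t x u).1 - (hoff n t x s).1) <= 2 * sup E.
  have [su|us] := leP s u.
    apply: (split2 _ _ s).
      apply: (keyS bu) => a ha /andP[w1 w2]; apply: hS => //; rewrite ler_norml; lra.
    apply: (keyS bs) => a ha /andP[w1 w2]; apply: hS => //; rewrite ler_norml; lra.
  apply: (split2 _ _ u).
    apply: (keyS bu) => a ha /andP[w1 w2]; apply: hS => //; rewrite ler_norml; lra.
  apply: (keyS bs) => a ha /andP[w1 w2]; apply: hS => //; rewrite ler_norml; lra.
have HB2 : enorm ((hoff n t x u).2 - (hoff n t x s).2) <= 2 * sup E.
  have [su|us] := leP s u.
    apply: (split2 _ _ u).
      apply: (keyS fu) => a ha /andP[w1 w2]; apply: hS => //; rewrite ler_norml; lra.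
    apply: (keyS fs) => a ha /andP[w1 w2]; apply: hS => //; rewrite ler_norml; lra.
  apply: (split2 _ _ s).
    apply: (keyS fu) => a ha /andP[w1 w2]; apply: hS => //; rewrite ler_norml; lra.
  apply: (keyS fs) => a ha /andP[w1 w2]; apply: hS => //; rewrite ler_norml; lra.
have e1 := enorm_sqr ((hoff n t x u).1 - (hoff n t x s).1).
have e2 := enorm_sqr ((hoff n t x u).2 - (hoff n t x s).2).
have g1 := enorm_ge0 ((hoff n t x u).1 - (hoff n t x s).1).
have g2 := enorm_ge0 ((hoff n t x u).2 - (hoff n t x s).2).
rewrite /enorm2; apply: sqrt_le; first lra.
rewrite /sqs in e1 e2.
rewrite /= -e1 -e2.
nra.
Qed.
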